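(* Let $G$ be a graph with vertex set $V$ partitioned into $V_1,\dots,V_k$ with no edge inside any $V_i$, let $G'$, $X,Y,U$ be as constructed in the context, and let $S=V\cup X\cup U$, $T=V\cup Y\cup U$ and $\ell=8\binom{k}{2}+2k$. If there is a token sliding reconfiguration sequence of length at most $\ell$ from $S$ to $T$ in $G'$, then $G$ contains a clique $\{v_1,\dots,v_k\}$ with $v_i\in V_i$ for all $i$.
   Context: Construction of $G'$: start with $V$. For each edge $e=\{u,v\}$ of $G$ add a vertex $x_e$ adjacent to $u$ and $v$; let $E$ be the set of all $x_e$, and for each unordered pair $\{i,j\}$, $i\ne j$, let $\mathcal{E}_{ij}$ be the set of $x_e$ with $e$ joining $V_i$ and $V_j$; label these $\binom k2$ sets by $1,\dots,\binom k2$. Add independent sets $X=\{a_1,\dots,a_{\binom k2}\}$, $Y=\{b_1,\dots,b_{\binom k2}\}$. For each label $t$ and each $x_e$ in the set labeled $t$, add a path $a_t-p-q-r-x_e$ with three new internal vertices, putting the middle vertex $q$ into $U_1$, and a path $b_t-p'-q'-r'-x_e$ with three new internal vertices, putting $q'$ into $U_2$; $U=U_1\cup U_2$. For each $v\in V$ add a new vertex $z_v$ adjacent only to $v$. A token sliding reconfiguration sequence of length $m$ from $S$ to $T$ is a sequence $S=I_0,\dots,I_m=T$ of independent sets of size $|S|$ with each $I_{j+1}=(I_j\setminus\{u\})\cup\{w\}$ for some $u\in I_j$, $w\notin I_j$, $\{u,w\}\in E(G')$. *)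

(* Defs.v *)
From HB Require Import structures.
From mathcomp Require Import all_boot.
Set Implicit Arguments. Unset Strict Implicit. Unset Printing Implicit Defensive.

Section Construction.
Variables (V : finType) (e : rel V) (k : nat) (part : V -> 'I_k).

Definition is_edge (A : {set V}) : bool :=
  [exists u, exists v, e u v && (A == [set u; v])].
Definition edgeT := {A : {set V} | is_edge A}.

Definition labT := {P : {set 'I_k} | #|P| == 2}.

Definition lab_of (t : labT) (x : edgeT) : bool := val t == part @: val x.

Inductive gvert :=
| GV of V
| GX of edgeT      (* subdivision vertex x_e *)
| GA of labT
| GB of labT
| GP of edgeT      (* p on the path a_t - p - q - r - x_e *)
| GQ of edgeT
| GR of edgeT
| GP' of edgeT     (* p' on the path b_t - p' - q' - r' - x_e *)
| GQ' of edgeT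
| GR' of edgeT
| GZ of V.

Definition gcode (x : gvert) : (V + edgeT + labT + labT + (edgeT * 'I_6) + V)%type :=
  match x with
  | GV v => inl (inl (inl (inl (inl v))))
  | GX a => inl (inl (inl (inl (inr a))))
  | GA t => inl (inl (inl (inr t)))
  | GB t => inl (inl (inr t))
  | GP a => inl (inr (a, inord 0))
  | GQ a => inl (inr (a, inord 1))
  | GR a => inl (inr (a, inord 2))
  | GP' a => inl (inr (a, inord 3))
  | GQ' a => inl (inr (a, inord 4))
  | GR' a => inl (inr (a, inord 5))
  | GZ v => inr v
  end.

Definition gdecode (c : (V + edgeT + labT + labT + (edgeT * 'I_6) + V)%type) : gvert :=
  match c with
  | inl (inl (inl (inl (inl v)))) => GV v
  | inl (inl (inl (inl (inr a)))) => GX a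
  | inl (inl (inl (inr t))) => GA t
  | inl (inl (inr t)) => GB t
  | inl (inr (a, i)) =>
      match val i with
      | 0 => GP a | 1 => GQ a | 2 => GR a | 3 => GP' a | 4 => GQ' a | _ => GR' a
      end
  | inr v => GZ v
  end.

Lemma gcodeK : cancel gcode gdecode.
Proof. by case=> //= a; rewrite inordK. Qed.

HB.instance Definition _ := Finite.copy gvert (can_type gcodeK).

Definition garc (x y : gvert) : bool :=
  match x, y with
  | GX a, GV v => v \in val a
  | GA t, GP a => lab_of t a
  | GP a, GQ b => a == b
  | GQ a, GR b => a == b
  | GR a, GX b => a == b
  | GB t, GP' a => lab_of t a
  | GP' a, GQ' b => a == b
  | GQ' a, GR' b => a == b
  | GR' a, GX b => a == b
  | GZ v, GV w => v == w
  | _, _ => false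
  end.

Definition gadj (x y : gvert) : bool := garc x y || garc y x.

Definition Vset : {set gvert} := [set x | if x is GV _ then true else false].
Definition Xset : {set gvert} := [set x | if x is GA _ then true else false].
Definition Yset : {set gvert} := [set x | if x is GB _ then true else false].
Definition U1set : {set gvert} := [set x | if x is GQ _ then true else false].
Definition U2set : {set gvert} := [set x | if x is GQ' _ then true else false].
Definition Uset : {set gvert} := U1set :|: U2set.

Definition Sset : {set gvert} := Vset :|: Xset :|: Uset.
Definition Tset : {set gvert} := Vset :|: Yset :|: Uset.

End Construction.

Section TokenSliding.
Variables (T : finType) (adj : rel T).

Definition independent (I : {set T}) : bool :=
  [forall x in I, forall y in I, ~~ adj x y].

Definition ts_step (I J : {set T}) : bool :=
  [exists u, exists w,
    [&& u \in I, w \notin I, adj u w & J == (I :\ u) :|: [set w]]].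

(* A token sliding reconfiguration sequence S = I_0, ..., I_m = T' of length m:
   I_1 .. I_m are the elements of s. *)
Definition ts_reconf (S T' : {set T}) (m : nat) : Prop :=
  exists s : seq {set T},
    [/\ size s = m, path ts_step S s, last S s = T' &
        all (fun I => independent I && (#|I| == #|S|)) (S :: s)].

End TokenSliding.

(* Main.v *)
Require Import Defs.
From HB Require Import structures.
From mathcomp Require Import all_boot zify.
Set Implicit Arguments. Unset Strict Implicit. Unset Printing Implicit Defensive.

Section Proof.
Variables (V : finType) (e : rel V) (k : nat) (part : V -> 'I_k).
Local Notation G := (gvert e k).
Local Notation adj := (gadj part).

Definition phi (x : G) : nat :=
  match x with GA _ => 0 | GP _ => 1 | GQ _ => 2 | GR _ => 3 | GX _ => 4
  | GR' _ => 5 | GQ' _ => 6 | GP' _ => 7 | GB _ => 8 | GV _ => 4 | GZ _ => 4 end.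

Definition isV (x : G) : bool := if x is GV _ then true else false.

Lemma adj_phi u w : adj u w -> phi w <= (phi u).+1.
Proof. by rewrite /gadj; case: u => ?; case: w => ?. Qed.

Lemma adj_phiV u w : adj u w -> isV u || isV w -> phi w = phi u.
Proof. by rewrite /gadj; case: u => ?; case: w => ? //=; rewrite orbF. Qed.

Lemma lab_uniq t t' (a : edgeT e) : lab_of part t a -> lab_of part t' a -> t = t'.
Proof. by move=> /eqP H /eqP H'; apply: val_inj; rewrite H H'. Qed.

Definition Cset (t : labT k) : {set G} :=
  [set x | match x with GA t' => t' == t | GP a | GQ a | GR a => lab_of part t a
           | _ => false end].

Lemma adj_cross t u w : u \in Cset t -> w \notin Cset t -> adj u w ->
  exists a : edgeT e, w = GX k a /\ lab_of part t a.
Proof.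
rewrite !inE /gadj; case: u => a; case: w => b //=; rewrite ?orbF ?andbT.



- by move=> /eqP -> /negP.
- by move=> H /eqP H' H2; case: H'; apply: (lab_uniq H2 H).
- by move=> H /negP H' /eqP E; subst.
- by move=> H /negP H' /eqP E; subst.
- by move=> H /negP H' /eqP E; subst.
- by move=> H _ /eqP E; subst; exists b.
- by move=> H /negP H' /eqP E; subst.
Qed.

Definition Phi (I : {set G}) := \sum_(x in I) phi x.
Definition cnt (C I : {set G}) := \sum_(x in I) ((x \in C) : nat).
Definition good t (E : {set V}) :=
  [exists a : edgeT e, lab_of part t a && (val a \subset E)].
Definition psi (E : {set V}) (I : {set G}) v := (v \in E) * (1 + (GV e k v \in I)).
Definition Psi E I := \sum_(v : V) psi E I v.
Definition Enext (E : {set V}) (J : {set G}) := E :|: [set v | GV e k v \notin J].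

Lemma step_sum (f : G -> nat) (I : {set G}) u w : u \in I -> w \notin I ->
  \sum_(x in I :\ u :|: [set w]) f x + f u = \sum_(x in I) f x + f w.
Proof.
move=> uI wI; rewrite setUC big_setU1 /=; last by rewrite !inE negb_and wI orbT.
by rewrite (big_setD1 u uI) /=; lia.
Qed.

Lemma adj_VV u w : adj u w -> isV u -> ~~ isV w.
Proof. by rewrite /gadj; case: u => ?; case: w => ?. Qed.

Lemma isV_ex x : isV x -> exists v, x = GV e k v.
Proof. by case: x => // v; exists v. Qed.

Lemma psi_same (E : {set V}) (I : {set G}) u w v :
  (forall v, GV e k v \notin I -> v \in E) -> GV e k v != u -> GV e k v != w ->
  psi (Enext E (I :\ u :|: [set w])) (I :\ u :|: [set w]) v = psi E I v.
Proof.
move=> inv nu nw.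
have HJ : (GV e k v \in I :\ u :|: [set w]) = (GV e k v \in I).
  by rewrite !inE (negbTE nw) nu orbF.
rewrite /psi HJ /Enext in_setU in_set HJ.
by case: (boolP (GV e k v \in I)) => H; rewrite ?orbF // (inv _ H) orbT.
Qed.

Lemma psi_le2 (E : {set V}) (I : {set G}) v : psi E I v <= 2.
Proof. by rewrite /psi; case: (v \in E); case: (GV e k v \in I). Qed.

Lemma step (S0 I J : {set G}) (E : {set V}) : ts_step adj I J -> independent adj J ->
  (forall v, GV e k v \notin I -> v \in E) ->
  (forall t, good t E || (cnt (Cset t) S0 <= cnt (Cset t) I)) ->
  [/\ forall v, GV e k v \notin J -> v \in Enext E J,
      forall t, good t (Enext E J) || (cnt (Cset t) S0 <= cnt (Cset t) J) &
      Phi J + Psi (Enext E J) J <= Phi I + Psi E I + 1].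
Proof.
case/existsP => u /existsP [w /and4P [uI wI uw /eqP ->]] indJ inv1 inv2.
split.
- by move=> v H; rewrite /Enext inE inE H orbT.
- move=> t; case/orP: (inv2 t) => [g|c].
    apply/orP; left; case/existsP: g => a /andP [l s]; apply/existsP; exists a.
    rewrite l /=; apply: subset_trans s _; apply/subsetP => v.
    by rewrite /Enext inE => ->.
  have key : cnt (Cset t) (I :\ u :|: [set w]) + (u \in Cset t) =
     cnt (Cset t) I + (w \in Cset t) := step_sum _ uI wI.
  case: (boolP (u \in Cset t)) => uC; case: (boolP (w \in Cset t)) => wC.
  + apply/orP; right; move: key c; rewrite uC wC /=.
    set a := cnt _ (I :\ u :|: _); set b := cnt _ I; set c0 := cnt _ S0; lia.
  + have [a [wa la]] := adj_cross uC wC uw.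
    apply/orP; left; apply/existsP; exists a; rewrite la /=.
    apply/subsetP => v va; rewrite /Enext inE; apply/orP; right; rewrite inE.
    apply/negP => vJ.
    have wJ : w \in I :\ u :|: [set w].
      by rewrite !inE eqxx orbT.
    move/forallP: indJ => /(_ w) /implyP /(_ wJ) /forallP /(_ (GV e k v)) /implyP /(_ vJ).
    by rewrite wa /gadj /= va.
  + apply/orP; right; move: key c; rewrite (negbTE uC) wC /=.
    set a := cnt _ (I :\ u :|: _); set b := cnt _ I; set c0 := cnt _ S0; lia.
  + apply/orP; right; move: key c; rewrite (negbTE uC) (negbTE wC) /=.
    set a := cnt _ (I :\ u :|: _); set b := cnt _ I; set c0 := cnt _ S0; lia.
- have key : Phi (I :\ u :|: [set w]) + phi u = Phi I + phi w := step_sum _ uI wI.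
  have wu : w != u by apply/eqP => E0; rewrite E0 uI in wI.
  case: (boolP (isV u || isV w)) => HV.
  + have Hp := adj_phiV uw HV.
    suff : Psi (Enext E (I :\ u :|: [set w])) (I :\ u :|: [set w]) <= Psi E I + 1.
      move: key; rewrite Hp; set pJ := Phi (I :\ u :|: [set w]); set pI := Phi I.
      set sJ := Psi (Enext E _) _; set sI := Psi E I; lia.
    case/orP: HV => Hv.
    * have [v0 Hu] := isV_ex Hv.
      have nw := adj_VV uw Hv.
      rewrite /Psi (bigD1 v0) //= [X in _ <= X + _](bigD1 v0) //=.
      rewrite (eq_bigr (fun v => psi E I v)).
        have : psi (Enext E (I :\ u :|: [set w])) (I :\ u :|: [set w]) v0 <= 1.
          rewrite /psi !inE -Hu eqxx /= [u == w]eq_sym (negbTE wu).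
          by case: (_ || _).
        lia.
      move=> v nv; apply: psi_same => //.
        by rewrite Hu; apply/eqP => [[E0]]; rewrite E0 eqxx in nv.
      by apply/eqP => E0; rewrite -E0 in nw.
    * have [v0 Hw] := isV_ex Hv.
      have nu : ~~ isV u by apply/negP => Hu; move: (adj_VV uw Hu); rewrite Hv.
      rewrite /Psi (bigD1 v0) //= [X in _ <= X + _](bigD1 v0) //=.
      rewrite (eq_bigr (fun v => psi E I v)).
        have : psi E I v0 = 1.
          have H0 : GV e k v0 \notin I by rewrite -Hw.
          by rewrite /psi (inv1 _ H0) (negbTE H0).
        have := psi_le2 (Enext E (I :\ u :|: [set w])) (I :\ u :|: [set w]) v0.
        lia.
      move=> v nv; apply: psi_same => //.
        by apply/eqP => E0; rewrite -E0 in nu.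
      by rewrite Hw; apply/eqP => [[E0]]; rewrite E0 eqxx in nv.
  + have Hp := adj_phi uw.
    suff : Psi (Enext E (I :\ u :|: [set w])) (I :\ u :|: [set w]) = Psi E I.
      move: key Hp; set pJ := Phi (I :\ u :|: [set w]); set pI := Phi I.
      set sJ := Psi (Enext E _) _; set sI := Psi E I; lia.
    apply: eq_bigr => v _; apply: psi_same => //.
      by apply/eqP => E0; rewrite -E0 in HV.
    by apply/eqP => E0; rewrite -E0 orbT in HV.
Qed.

Definition inv1 (I : {set G}) (E : {set V}) := forall v, GV e k v \notin I -> v \in E.
Definition inv2 (S0 I : {set G}) (E : {set V}) :=
  forall t, good t E || (cnt (Cset t) S0 <= cnt (Cset t) I).

Lemma main_ind (S0 : {set G}) s : forall I E, path (ts_step adj) I s ->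
  all (independent adj) s -> inv1 I E -> inv2 S0 I E ->
  exists D : {set V}, [/\ inv1 (last I s) D, inv2 S0 (last I s) D &
     Phi (last I s) + Psi D (last I s) <= Phi I + Psi E I + size s].
Proof.
elim: s => [|J s IH] I E /=.
  by move=> _ _ h1 h2; exists E; split => //; rewrite addn0.
case/andP => st p /andP [iJ iall] h1 h2.
have [h1' h2' h3] := step st iJ h1 h2.
have [D [d1 d2 d3]] := IH _ _ p iall h1' h2'.
exists D; split => //; move: h3 d3.
set a := Phi (last _ _); set b := Psi D _; set c := Phi J; set d := Psi (Enext E J) J.
set f := Phi I; set g := Psi E I; lia.
Qed.

Lemma Psi0 (I : {set G}) : Psi set0 I = 0.
Proof. by apply: big1 => v _; rewrite /psi inE. Qed.

Lemma PsiT (D : {set V}) : Psi D (Tset e k) = #|D| * 2.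
Proof.
rewrite /Psi -sum_nat_const [RHS]big_mkcond /=; apply: eq_bigr => v _.
by rewrite /psi !inE /=; case: (v \in D).
Qed.

Lemma PhiT : Phi (Tset e k) = Phi (Sset e k) + #|{: labT k}| * 8.
Proof.
rewrite /Phi !(big_mkcond (fun x => x \in _)) /=.
rewrite (eq_bigr (fun x => (if x \in Sset e k then phi x else 0) +
                            (if x is GB _ then 8 else 0))); last first.
  by move=> x _; case: x => a; rewrite !inE.
rewrite big_split /=; congr (_ + _).
rewrite -sum_nat_const.
have -> : \sum_(i : labT k) 8 = \sum_(x in [set GB e t | t : labT k]) 8.
  by rewrite big_imset //= => x y _ _ [].
rewrite [RHS]big_mkcond /=; apply: eq_bigr => x _.
case: x => a; case: imsetP => [[t _ E0]|nE] //; try discriminate.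
by case: nE; exists a.
Qed.

Lemma card_lab : #|{: labT k}| = 'C(k, 2).
Proof.
rewrite card_sig -[in RHS](card_ord k) -card_draws.
by apply: eq_card => P; rewrite !inE.
Qed.

Lemma cntST t : cnt (Cset t) (Sset e k) = cnt (Cset t) (Tset e k) + 1.
Proof.
rewrite /cnt !(big_mkcond (fun x => x \in _)) /=.
rewrite (eq_bigr (fun x => (if x \in Tset e k then ((x \in Cset t) : nat) else 0) +
                            (x == GA e t))); last first.
  move=> x _; case: (eqVneq x (GA e t)) => [->|nx]; first by rewrite !inE /= eqxx.
  rewrite addn0; case: x nx => a nx; rewrite !inE //=.
  suff -> : (a == t) = false by []. by apply: contraNF nx => /eqP ->.
rewrite big_split /=; congr (_ + _).
by rewrite (bigD1 (GA e t)) //= eqxx big1 // => x /negbTE ->.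
Qed.

End Proof.

Theorem lemma5p3 (V : finType) (e : rel V) (k : nat) (part : V -> 'I_k)
  (e_sym : symmetric e) (e_irr : irreflexive e)
  (part_nonempty : forall i : 'I_k, exists v, part v = i)
  (no_inner_edge : forall u v, e u v -> part u != part v)
  (m : nat) (hm : m <= 8 * 'C(k, 2) + 2 * k)
  (hseq : ts_reconf (@gadj V e k part) (@Sset V e k) (@Tset V e k) m) :
  exists f : 'I_k -> V,
    (forall i, part (f i) = i) /\ (forall i j, i != j -> e (f i) (f j)).
Proof.
case: hseq => s [hs hp hl hall].
have iall : all (independent (gadj part)) s.
  by move: hall => /= /andP [_]; apply: sub_all => I /andP [].
have h1 : inv1 (Sset e k) set0 by move=> v; rewrite !inE.
have h2 : inv2 part (Sset e k) (Sset e k) set0 by move=> t; rewrite leqnn orbT.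
have [D [_ d2 d3]] := main_ind hp iall h1 h2.
rewrite hl hs Psi0 PsiT PhiT card_lab in d3.
have Dk : #|D| <= k.
  move: d3 hm; set P := Phi _; set c := 'C(k, 2); lia.
have gD : forall t, good e part t D.
  by move=> t; case/orP: (d2 t) => //; rewrite hl cntST addn1 ltnn.
case: (leqP k 1) => hk.
  have /fin_all_exists [f Hf] := part_nonempty.
  exists f; split => // i j /eqP ij; exfalso; apply: ij; apply: val_inj.
  by move: (ltn_ord i) (ltn_ord j); case: i j => [a ?] [b ?] /=; lia.
have pair2 : forall i j : 'I_k, i != j -> #|[set i; j]| == 2.
  by move=> i j ij; rewrite cards2 ij.
have hs2 : forall i : 'I_k, exists v, (v \in D) && (part v == i).
  move=> i.
  have [j ij] : exists j : 'I_k, i != j.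
    case: (eqVneq (val i) 0) => H.
      by exists (Ordinal hk); rewrite -val_eqE /= H.
    by exists (Ordinal (ltnW hk)); rewrite -val_eqE /=.
  have /existsP [a /andP [la sa]] := gD (exist (fun P : {set 'I_k} => #|P| == 2) [set i; j] (pair2 i j ij) : labT k).
  have la' : [set i; j] = part @: val a := eqP la.
  have : i \in part @: val a by rewrite -la' !inE eqxx.
  case/imsetP => v va ->; exists v; rewrite eqxx andbT.
  by apply: (subsetP sa).
have inj : {in D &, injective part}.
  apply/imset_injP; rewrite eqn_leq; apply/andP; split; first exact: leq_imset_card.
  have -> : part @: D = setT.
    apply/setP => i; rewrite inE; have [v /andP [vD /eqP <-]] := hs2 i.
    exact: imset_f.
  by rewrite cardsT card_ord.
have /fin_all_exists [f Hf] := hs2.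
exists f; split; first by move=> i; have /andP [_ /eqP] := Hf i.
move=> i j ij.
have /existsP [[A Ae] /andP [la sa]] := gD (exist (fun P : {set 'I_k} => #|P| == 2) [set i; j] (pair2 i j ij) : labT k).
case/existsP: (Ae) => u /existsP [v /andP [euv /eqP Auv]].
have la' : [set i; j] = part @: [set u; v] by rewrite -Auv; exact: (eqP la).
have sa' : [set u; v] \subset D by rewrite -Auv.
have uD : u \in D by apply: (subsetP sa'); rewrite !inE eqxx.
have vD : v \in D by apply: (subsetP sa'); rewrite !inE eqxx orbT.
have puv := no_inner_edge _ _ euv.
have pu : part u \in [set i; j] by rewrite la'; apply: imset_f; rewrite !inE eqxx.
have pv : part v \in [set i; j] by rewrite la'; apply: imset_f; rewrite !inE eqxx orbT.
have [fiD /eqP fi] := andP (Hf i); have [fjD /eqP fj] := andP (Hf j).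
rewrite !inE in pu pv.
case/orP: pu => /eqP pu; case/orP: pv => /eqP pv.
- by rewrite pu pv eqxx in puv.
- have -> : f i = u by apply: inj => //; rewrite fi pu.
  have -> : f j = v by apply: inj => //; rewrite fj pv.
  exact: euv.
- have -> : f i = v by apply: inj => //; rewrite fi pv.
  have -> : f j = u by apply: inj => //; rewrite fj pu.
  by rewrite e_sym.
- by rewrite pu pv eqxx in puv.
Qed.
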